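(* Let $\mathcal{C}\le\mathbb{F}_q^n$ be a linear code with $q\neq 2$, and assume every codeword of $\mathcal{C}$ has even weight. Let $c_1,\dots,c_r\in\mathcal{C}$ be codewords of weight $2$ such that $c_i\notin\langle c_j\rangle_{\mathbb{F}_q}$ for all $i\neq j$. Then $\mathrm{supp}(c_i)\cap\mathrm{supp}(c_j)=\emptyset$ for all $i\neq j$.
   Context: The support of $c\in\mathbb{F}_q^n$ is $\mathrm{supp}(c)=\{k: c_k\neq 0\}$ and its weight is $|\mathrm{supp}(c)|$. *)

(* Defs.v *)
From HB Require Import structures.
From mathcomp Require Import all_boot all_order all_algebra all_field.
Set Implicit Arguments. Unset Strict Implicit. Unset Printing Implicit Defensive.
Import GRing.Theory.
Local Open Scope ring_scope.

Definition supp (F : finFieldType) (n : nat) (c : 'rV[F]_n) : {set 'I_n} :=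
  [set k | c 0 k != 0].

Definition wt (F : finFieldType) (n : nat) (c : 'rV[F]_n) : nat := #|supp c|.

(* Main.v *)
Require Import Defs.
From HB Require Import structures.
From mathcomp Require Import all_boot all_order all_algebra all_field.
Import GRing.Theory.
Local Open Scope ring_scope.

Lemma wt2P (F : finFieldType) (n : nat) (v : 'rV[F]_n) k :
  wt v = 2%N -> k \in supp v ->
  exists a, a != k /\ forall t, (v 0 t != 0) = (t == k) || (t == a).
Proof.
move=> hw hk.
have : #|supp v :\ k| = 1%N.
  by move: hw; rewrite /wt (cardsD1 k) hk => -[].
move/eqP/cards1P=> [a ha].
have hak : a != k by have := set11 a; rewrite -ha !inE => /andP[].
exists a; split=> // t.
have e : (t \in supp v :\ k) = (t \in [set a]) by rewrite ha.
move: e; rewrite !inE.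
case: (eqVneq t k) => [->|tk] /= e.
  by move: hk; rewrite inE.
by rewrite -e.
Qed.
Theorem corollary3p2 (F : finFieldType) (n : nat) (C : {vspace 'rV[F]_n})
  (r : nat) (c : 'I_r -> 'rV[F]_n) :
  #|F| != 2%N ->
  (forall x, x \in C -> ~~ odd (wt x)) ->
  (forall i, c i \in C) ->
  (forall i, wt (c i) = 2%N) ->
  (forall i j, i != j -> c i \notin <[c j]>%VS) ->
  forall i j, i != j -> supp (c i) :&: supp (c j) = set0.
Proof.
move=> hF hev hC hw hind i j ij.
apply/eqP; apply/set0Pn => -[k]; rewrite inE => /andP[ki kj].
have [a [ak ha]] := @wt2P _ _ _ _ (hw i) ki.
have [b [bk hb]] := @wt2P _ _ _ _ (hw j) kj.
have cik : c i 0 k != 0 by rewrite ha eqxx.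
have cjk : c j 0 k != 0 by rewrite hb eqxx.
set v := c i; set w := c j.
pose lam := v 0 k / w 0 k.
have Ecoef : forall m t, (v - m *: w) 0 t = v 0 t - m * w 0 t.
  by move=> m t; rewrite !mxE.
have inC : forall m, v - m *: w \in C.
  by move=> m; rewrite memvB ?memvZ ?hC.
case: (eqVneq a b) => [eab|nab].
-
  set x := v - lam *: w.
  have sub : supp x \subset [set a].
    apply/subsetP => t; rewrite !inE Ecoef.
    case: (eqVneq t k) => [->|tk].
      by rewrite /lam divfK // subrr eqxx.
    case: (eqVneq t a) => // ta.
    have : v 0 t = 0 by apply/eqP; move: (ha t); rewrite (negbTE tk) (negbTE ta) /= => /negbFE.
    have : w 0 t = 0 by apply/eqP; move: (hb t); rewrite (negbTE tk) -eab (negbTE ta) /= => /negbFE.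
    by move=> -> ->; rewrite mulr0 subr0 eqxx.
  have := subset_leq_card sub; rewrite cards1 => le1.
  have h0 : #|supp x| = 0%N.
    move: le1 (hev x (inC lam)); rewrite /wt; case: #|supp x| => [//|[//|//]].
  have x0 : x = 0.
    apply/rowP => t; rewrite [RHS]mxE; apply/eqP.
    have := card0_eq h0 t; rewrite [in LHS]inE => H.
    by apply: negbFE; rewrite H.
  have : v = lam *: w by apply/eqP; rewrite -subr_eq0 -/x x0.
  move=> ev; move: (hind i j ij); rewrite -/v -/w ev.
  by rewrite memvZ // memv_line.
- have [m hm] : exists m : F, (m != 0) && (m != lam).
    apply/existsP; apply: contraTT hF => /existsPn hall.
    have sub : [set: F] \subset [set 0; lam].
      by apply/subsetP => m _; move: (hall m); rewrite !inE negb_and !negbK => /orP[] ->; rewrite ?orbT.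
    have := subset_leq_card sub; rewrite cardsT => le2.
    have two : (2 <= #|F|)%N.
      have := max_card (mem [set (0:F); 1]).
      by rewrite cards2 eq_sym oner_eq0.
    rewrite eqn_leq two andbT.
    rewrite negbK; apply: leq_trans le2 _; rewrite cards2; by case: (_ != _).
  move: hm => /andP[m0 ml].
  set y := v - m *: w.
  have ey : supp y = [set k; a; b].
    apply/setP => t; rewrite !inE Ecoef.
    case: (eqVneq t k) => [->|tk] /=.
      rewrite subr_eq0; apply: contra ml => /eqP e.
      by rewrite /lam e mulfK.
    case: (eqVneq t a) => [->|ta] /=.
      have : w 0 a = 0 by apply/eqP; move: (hb a); rewrite (negbTE ak) (negbTE nab) /= => /negbFE.
      by move=> ->; rewrite mulr0 subr0 ha eqxx orbT.
    have : v 0 t = 0 by apply/eqP; move: (ha t); rewrite (negbTE tk) (negbTE ta) /= => /negbFE.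
    move=> ->; rewrite sub0r oppr_eq0 mulf_eq0 (negbTE m0) /= hb (negbTE tk) //.
  have := hev y (inC m); rewrite /wt ey.
  rewrite setUC cardsU1 cards2 !inE (negbTE bk) eq_sym (negbTE nab) eq_sym ak.
  by [].
Qed.
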